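(* Define, for $x\in\mathbb{R}$, $$f_{U|-1}(x)=\frac{0.5}{\sqrt{2\pi}}e^{-(x+2)^{2}}+\frac{0.5}{\sqrt{2\pi}}e^{-x^{2}},\qquad f_{U|+1}(x)=\frac{0.5}{\sqrt{2\pi}}e^{-(x-2)^{2}}+\frac{0.5}{\sqrt{2\pi}}e^{-x^{2}},$$ and let $\Phi(t)=1$ for $t\ge 0$ and $\Phi(t)=0$ for $t<0$. Then there does not exist a continuous function $\Psi:\mathbb{R}\times\mathbb{R}\to[0,\infty)$, $(v,u)\mapsto\Psi(v|u)$, satisfying all three of the following conditions: (1) for every fixed $u\in\mathbb{R}$, $v\mapsto\Psi(v|u)$ is a probability density function on $\mathbb{R}$; (2) the quantity $\int_{-\infty}^{+\infty}\left|\int_{-\infty}^{t}\Psi(v|u)\,dv-\Phi(t-u)\right|^{2}dt$, as $u$ ranges over $\mathbb{R}$, has a strictly positive lower bound (i.e., there is $c>0$ with this quantity $\ge c$ for every $u\in\mathbb{R}$); (3) for each $\mathsf{x}_1\in\{-1,+1\}$ and every $v\in\mathbb{R}$, $\int_{-\infty}^{+\infty}f_{U|\mathsf{x}_1}(u)\Psi(v|u)\,du=f_{U|\mathsf{x}_1}(v)$.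
   Context: This is the ''non-manipulability'' of the following channel: $X_1,X_2$ are independent and uniform on $\{-1,+1\}$, $N_r$ is noise independent of them with density proportional to $e^{-x^2}$, and the relay receives $U=X_1+X_2+N_r$; $f_{U|\mathsf{x}_1}$ is (up to the printed normalizing constant, which does not affect the claim) the conditional density of $U$ given $X_1=\mathsf{x}_1$. $\Psi(v|u)$ is interpreted as a (memoryless) rule by which the relay, having received $u$, produces a forwarded value $v$; condition (2) says the rule is uniformly bounded away from forwarding $u$ unchanged. *)

(* Defs.v *)
From mathcomp Require Import all_boot all_order all_algebra.
From mathcomp Require Import all_classical all_reals all_analysis.
Import Order.TTheory GRing.Theory Num.Theory.
Import numFieldNormedType.Exports.
Local Open Scope classical_set_scope.
Local Open Scope ring_scope.

(* f_{U|x1}(x) = 0.5/sqrt(2 pi) e^{-(x - 2 x1)^2} + 0.5/sqrt(2 pi) e^{-x^2};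
   for x1 = -1 this is the (x+2) version, for x1 = +1 the (x-2) version. *)
Definition fU (R : realType) (x1 x : R) : R :=
  (1 / 2) / Num.sqrt (2 * pi) * expR (- (x - 2 * x1) ^+ 2)
  + (1 / 2) / Num.sqrt (2 * pi) * expR (- x ^+ 2).

Definition Phi (R : realType) (t : R) : R := if 0 <= t then 1 else 0.

Definition is_pdf (R : realType) (g : R -> R) : Prop :=
  (forall v, 0 <= g v) /\ measurable_fun setT g /\
  (\int[(@lebesgue_measure R)]_(v in setT) (g v)%:E = 1)%E.
Arguments fU {R}.
Arguments Phi {R}.
Arguments is_pdf {R}.

(* Main.v *)
Require Import Defs.
From mathcomp Require Import all_boot all_order all_algebra.
From mathcomp Require Import all_classical all_reals all_analysis.
Import Order.TTheory GRing.Theory Num.Theory.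
Import numFieldNormedType.Exports.
Local Open Scope classical_set_scope.
Local Open Scope ring_scope.
From mathcomp Require Import measurable_realfun.
From mathcomp Require Import ring lra.
Lemma cont_pair_l (R : realType) (c : R) : continuous (fun x : R => (x, c)).
Proof.
move=> x.
have := @cvg_pair _ _ _ (nbhs x) (nbhs x) (nbhs c) _ _ _ id (cst c) cvg_id (cvg_cst c).
exact.
Qed.

Lemma floor_set_meas (R : realType) (m : R) (k : int) :
  measurable [set y : R | Num.floor (m * y) = k].
Proof.
have -> : [set y : R | Num.floor (m * y) = k] =
  (fun y => m * y) @^-1` `[k%:~R, (k + 1)%:~R[.
  apply/seteqP; split => y /=.
    by move=> <-; rewrite in_itv /= floor_le floorD1_gt.
  by rewrite in_itv /= => H; apply/eqP; rewrite floor_eq H.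
have cm : continuous (fun y : R => m * y).
  by move=> y; apply: cvgMr; exact: cvg_id.
have := @continuous_measurable_fun R (fun y => m * y) cm measurableT _ (measurable_itv `[k%:~R, (k + 1)%:~R[).
by rewrite setTI.
Qed.

Lemma cont2_meas (R : realType) (G : R * R -> R) :
  continuous G -> measurable_fun setT G.
Proof.
move=> cG.
pose fl (n : nat) (y : R) : R := (Num.floor (n.+1%:R * y))%:~R / n.+1%:R.
pose phi n (p : R * R) := G (p.1, fl n p.2).
apply: (@measurable_fun_cvg _ _ _ _ phi).
- move=> n _ A mA; rewrite setTI.
  have -> : phi n @^-1` A = \bigcup_(k : int)
     ((fun x => G (x, k%:~R / n.+1%:R)) @^-1` A `*`
       [set y | Num.floor (n.+1%:R * y) = k]).
    apply/seteqP; split => [[x y]|[x y]] /=.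
      by move=> H; exists (Num.floor (n.+1%:R * y)) => //.
    by move=> [k _ /= [H1 H2]]; rewrite /phi /fl /= H2.
  apply: countable_bigcupT_measurable; first exact: countableP.
  move=> k; apply: measurableX; last exact: floor_set_meas.
  have cm : continuous (fun x => G (x, k%:~R / n.+1%:R)).
    move=> x; apply: continuous_comp; [exact: cont_pair_l | exact: cG].
  have := @continuous_measurable_fun R _ cm measurableT A mA.
  by rewrite setTI.
- move=> [x y] _; rewrite /phi /=.
  have Hfl : fl n y @[n --> \oo] --> y.
    apply/cvgrPdist_le => e e0.
    apply: filterS (near_infty_natSinv_lt (PosNum e0)) => n /= Hn.
    have m0 : 0 < n.+1%:R :> R by [].
    have F1 := floor_le (n.+1%:R * y).
    have F2 := floorD1_gt (n.+1%:R * y).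
    rewrite intrD /= in F2.
    have -> : y - fl n y = (n.+1%:R * y - (Num.floor (n.+1%:R * y))%:~R) / n.+1%:R.
      by rewrite /fl; field; rewrite gt_eqF.
    rewrite ger0_norm; last by rewrite divr_ge0 ?subr_ge0 // ltW.
    apply: le_trans (ltW Hn).
    rewrite ler_pdivrMr // mulVf ?gt_eqF //; lra.
  have H : (x, fl n y) @[n --> \oo] --> (x, y).
    exact: (cvg_pair (cvg_cst x) Hfl).
  have := cvg_comp _ G H (cG (x, y)). exact.
Qed.
Local Open Scope ereal_scope.
Lemma fU_E (R : realType) (x1 x : R) :
  fU x1 x = ((1 / 2) / Num.sqrt (2 * pi) * gauss_fun (x - 2 * x1)
            + (1 / 2) / Num.sqrt (2 * pi) * gauss_fun x)%R.
Proof. by []. Qed.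

Lemma fU_a_gt0 (R : realType) : (0 < (1 / 2) / Num.sqrt (2 * pi) :> R)%R.
Proof. by rewrite divr_gt0 // sqrtr_gt0 mulr_gt0 // pi_gt0. Qed.

Lemma fU_gt0 (R : realType) (x1 x : R) : (0 < fU x1 x)%R.
Proof.
by rewrite fU_E addr_gt0 // mulr_gt0 ?fU_a_gt0 // expR_gt0.
Qed.

Lemma fU_cont (R : realType) (x1 : R) : continuous (fU x1).
Proof.
have c1 : continuous (fun y : R => gauss_fun (y - 2 * x1)).
  move=> y; apply: continuous_comp; last exact: continuous_gauss_fun.
  by apply: cvgB; [exact: cvg_id | exact: cvg_cst].
have -> : fU x1 = (fun y => (1 / 2) / Num.sqrt (2 * pi) * gauss_fun (y - 2 * x1)
            + (1 / 2) / Num.sqrt (2 * pi) * gauss_fun y)%R by apply/funext => y.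
move=> x; apply: cvgD; apply: cvgM;
  [exact: cvg_cst | exact: c1 | exact: cvg_cst | exact: continuous_gauss_fun].
Qed.

Lemma fU_meas (R : realType) (x1 : R) : measurable_fun setT (fU x1).
Proof. by apply: continuous_measurable_fun; exact: fU_cont. Qed.

Lemma fU_eq (R : realType) (v : R) : fU (-1) v = fU 1 v -> v = 0%R.
Proof.
rewrite !fU_E => /addIr /mulfI.
move=> /(_ (lt0r_neq0 (fU_a_gt0 R))) /expR_inj /oppr_inj /eqP.
rewrite eqf_sqr => /orP [] /eqP; lra.
Qed.

Lemma normal_pdf1E (R : realType) (m x : R) :
  normal_pdf m 1 x = (normal_peak 1 * expR (- (x - m) ^+ 2 / 2))%R.
Proof. by rewrite /normal_pdf oner_eq0 /normal_fun expr1n. Qed.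

Lemma gauss_le_normal (R : realType) (m x : R) :
  (gauss_fun (x - m) <= (normal_peak 1)^-1 * normal_pdf m 1 x)%R.
Proof.
rewrite normal_pdf1E mulrA mulVf ?mul1r; last by rewrite gt_eqF // normal_peak_gt0.
rewrite /gauss_fun ler_expR.
have := sqr_ge0 (x - m); lra.
Qed.

Lemma fU1_int (R : realType) :
  \int[@lebesgue_measure R]_x (fU 1 x)%:E < +oo.
Proof.
pose C := ((1 / 2) / Num.sqrt (2 * pi) / normal_peak 1 : R)%R.
have C0 : (0 <= C)%R by apply: divr_ge0; [apply: ltW; exact: fU_a_gt0 | exact: normal_peak_ge0].
apply: (@le_lt_trans _ _ (\int[@lebesgue_measure R]_x (C%:E * ((normal_pdf 2 1 x)%:E + (normal_pdf 0 1 x)%:E)))).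
  apply: ge0_le_integral => //.
  - by move=> x _; rewrite lee_fin ltW // fU_gt0.
  - by apply/measurable_EFinP; exact: fU_meas.
  - apply: emeasurable_funM => //; apply: emeasurable_funD;
    by apply/measurable_EFinP; exact: measurable_normal_pdf.
  - move=> x _; rewrite -EFinD -EFinM lee_fin fU_E mulr1.
    have H2 := gauss_le_normal _ 2%R x.
    have H0 := gauss_le_normal _ 0%R x; rewrite subr0 in H0.
    set a := ((1 / 2) / Num.sqrt (2 * pi) : R)%R.
    have -> : (C * (normal_pdf 2 1 x + normal_pdf 0 1 x) =
       a * ((normal_peak 1)^-1 * normal_pdf 2 1 x) +
       a * ((normal_peak 1)^-1 * normal_pdf 0 1 x))%R by rewrite /C /a; ring.
    by apply: lerD; rewrite ler_pM2l ?fU_a_gt0.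
have mn (m : R) : measurable_fun setT (fun x => (normal_pdf m 1 x)%:E).
  by apply/measurable_EFinP; exact: measurable_normal_pdf.
have n0 (m x : R) : 0 <= (normal_pdf m 1 x)%:E by rewrite lee_fin normal_pdf_ge0.
rewrite ge0_integralZl //; try (by apply: emeasurable_funD; apply: mn);
  try (by move=> x _; apply: adde_ge0); try (by rewrite lee_fin).
rewrite ge0_integralD //; try exact: mn.
rewrite (integral_normal_pdf 2%R 1%R) (integral_normal_pdf 0%R 1%R).
by rewrite -EFinD -EFinM ltry.
Qed.
Lemma cont_fst (R : realType) (a : R -> R) :
  continuous a -> continuous (fun z : R * R => a z.1).
Proof.
move=> ca z; apply: (@continuous_comp _ _ _ fst a z); last exact: ca.
exact: cvg_fst.
Qed.

Lemma cont_snd (R : realType) (a : R -> R) :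
  continuous a -> continuous (fun z : R * R => a z.2).
Proof.
move=> ca z; apply: (@continuous_comp _ _ _ snd a z); last exact: ca.
exact: cvg_snd.
Qed.

Lemma mc2 (R : realType) (G : R * R -> R) :
  continuous G -> measurable_fun setT (fun z => (G z)%:E).
Proof. by move=> cG; apply/measurable_EFinP; exact: cont2_meas. Qed.

Lemma mc1 (R : realType) (G : R -> R) :
  continuous G -> measurable_fun setT (fun z => (G z)%:E).
Proof. by move=> cG; apply/measurable_EFinP; exact: continuous_measurable_fun. Qed.
Local Close Scope ereal_scope.
Local Notation mu := lebesgue_measure.

Theorem proposition1 (R : realType) :
  ~ exists Psi : R -> R -> R,
      continuous (fun p : R * R => Psi p.1 p.2) /\
      (forall v u, 0 <= Psi v u) /\
      (forall u, is_pdf (fun v => Psi v u)) /\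
      (exists c : R, 0 < c /\
         forall u, (c%:E <= \int[(@lebesgue_measure R)]_(t in setT)
            ((fine (\int[(@lebesgue_measure R)]_(v in `]-oo, t]) (Psi v u)%:E)
              - Phi (t - u)) ^+ 2)%:E)%E) /\
      (forall x1 v : R, (x1 = -1 \/ x1 = 1) ->
         (\int[(@lebesgue_measure R)]_(u in setT) (fU x1 u * Psi v u)%:E
          = (fU x1 v)%:E)%E).
Proof.
move=> [Psi [cPsi [Psi0 [pdf [_ stat]]]]].
pose P (z : R * R) := Psi z.2 z.1.
have cP : continuous P.
  move=> z; apply: (@continuous_comp _ _ _ (fun z : R * R => (z.2, z.1))
     (fun p : R * R => Psi p.1 p.2) z); last exact: cPsi.
  exact: (cvg_pair cvg_snd cvg_fst).
have cPu (v : R) : continuous (fun u => Psi v u).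
  move=> u; apply: (@continuous_comp _ _ _ (fun u : R => (v, u))
     (fun p : R * R => Psi p.1 p.2) u); last exact: cPsi.
  exact: (cvg_pair (cvg_cst v) cvg_id).
have cPv (u : R) : continuous (fun v => Psi v u).
  move=> v; apply: (@continuous_comp _ _ _ (fun v : R => (v, u))
     (fun p : R * R => Psi p.1 p.2) v); last exact: cPsi.
  exact: (cvg_pair cvg_id (cvg_cst u)).
pose p := fun u : R => fU (-1) u + fU 1 u.
pose q := fun u : R => fU 1 u.
pose h := fun u : R => q u / p u.
have p0 u : 0 < p u by rewrite addr_gt0 // fU_gt0.
have q0 u : 0 < q u by rewrite fU_gt0.
have cp : continuous p by move=> u; apply: cvgD; exact: fU_cont.
have cq : continuous q by exact: fU_cont.
have ch : continuous h.
  move=> u; apply: cvgM; first exact: cq.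
  by apply: continuousV; [rewrite gt_eqF | exact: cp].
have h1 u : h u <= 1.
  by rewrite /h ler_pdivrMr // mul1r lerDr ltW // fU_gt0.
have h0 u : 0 <= h u by rewrite /h divr_ge0 // ltW.
have tot u : (\int[@lebesgue_measure R]_v (Psi v u)%:E = 1)%E by case: (pdf u) => _ [].
have stq v : (\int[@lebesgue_measure R]_u (q u * Psi v u)%:E = (q v)%:E)%E.
  by apply: stat; right.
have stp v : (\int[@lebesgue_measure R]_u (p u * Psi v u)%:E = (p v)%:E)%E.
  under eq_integral do rewrite mulrDl EFinD.
  rewrite ge0_integralD //.
  - by rewrite stat ?stq ?EFinD //; left.
  - by move=> u _; rewrite lee_fin mulr_ge0 // ltW // fU_gt0.
  - by apply: mc1 => u; apply: cvgM; [exact: fU_cont | exact: cPu].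
  - by move=> u _; rewrite lee_fin mulr_ge0 // ltW // fU_gt0.
  - by apply: mc1 => u; apply: cvgM; [exact: fU_cont | exact: cPu].
pose FF := fun z : R * R => (p z.1 * P z * (h z.1 - h z.2) ^+ 2)%:E.
pose CC := fun z : R * R => (q z.1 * P z * h z.2)%:E.
pose AA := fun z : R * R => (p z.1 * h z.1 ^+ 2 * P z)%:E.
pose BB := fun z : R * R => (p z.1 * P z * h z.2 ^+ 2)%:E.
have cp1 : continuous (fun z : R * R => p z.1) by exact: cont_fst.
have cq1 : continuous (fun z : R * R => q z.1) by exact: cont_fst.
have ch1 : continuous (fun z : R * R => h z.1) by exact: cont_fst.
have ch2 : continuous (fun z : R * R => h z.2) by exact: cont_snd.
have cFF : continuous (fun z : R * R => p z.1 * P z * (h z.1 - h z.2) ^+ 2).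
  move=> z; apply: cvgM; first by apply: cvgM; [exact: cp1 | exact: cP].
  apply: (@continuous_comp _ _ _ (fun z : R * R => h z.1 - h z.2) (fun x => x ^+ 2) z).
    by apply: cvgB; [exact: ch1 | exact: ch2].
  exact: sqr_continuous.
have mFF : measurable_fun setT FF by exact: mc2.
have mCC : measurable_fun setT CC.
  apply: mc2 => z; apply: cvgM; last exact: ch2.
  by apply: cvgM; [exact: cq1 | exact: cP].
have mAA : measurable_fun setT AA.
  apply: mc2 => z; apply: cvgM; last exact: cP.
  apply: cvgM; first exact: cp1.
  by apply: (@continuous_comp _ _ _ (fun z : R * R => h z.1) (fun x => x ^+ 2) z);
    [exact: ch1 | exact: sqr_continuous].
have mBB : measurable_fun setT BB.
  apply: mc2 => z; apply: cvgM; first by apply: cvgM; [exact: cp1 | exact: cP].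
  by apply: (@continuous_comp _ _ _ (fun z : R * R => h z.2) (fun x => x ^+ 2) z);
    [exact: ch2 | exact: sqr_continuous].
have FF0 z : (0 <= FF z)%E.
  rewrite /FF lee_fin; apply: mulr_ge0; [apply: mulr_ge0; [exact: ltW | exact: Psi0] | exact: sqr_ge0].
have CC0 z : (0 <= CC z)%E.
  rewrite /CC lee_fin; apply: mulr_ge0; [apply: mulr_ge0; [exact: ltW | exact: Psi0] | exact: h0].
have AA0 z : (0 <= AA z)%E.
  rewrite /AA lee_fin; apply: mulr_ge0; [apply: mulr_ge0; [exact: ltW | exact: sqr_ge0] | exact: Psi0].
have BB0 z : (0 <= BB z)%E.
  rewrite /BB lee_fin; apply: mulr_ge0; [apply: mulr_ge0; [exact: ltW | exact: Psi0] | exact: sqr_ge0].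
have key z : (FF z + (CC z + CC z) = AA z + BB z)%E.
  rewrite /FF /CC /AA /BB -!EFinD; congr EFin.
  rewrite /h; have := p0 z.1; have := p0 z.2; move=> /lt0r_neq0 pz2 /lt0r_neq0 pz1.
  by rewrite /=; field; rewrite pz1 pz2.
pose K := (\int[mu]_u (p u * h u ^+ 2)%:E)%E.
have mPv u : measurable_fun setT (fun v => (Psi v u)%:E) by exact: mc1.
have mPu v : measurable_fun setT (fun u => (Psi v u)%:E) by exact: mc1.
have IAA : (\int[mu \x mu]_z AA z = K)%E.
  rewrite (@fubini_tonelli1 _ _ _ _ R mu mu AA mAA AA0); apply: eq_integral => u _.
  rewrite /fubini_F /AA /P /=.
  under eq_integral do rewrite EFinM.
  rewrite ge0_integralZl //; first by rewrite tot mule1.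
  - exact: mPv.
  - by move=> v _; rewrite lee_fin.
  - by rewrite lee_fin; apply: mulr_ge0; [exact: ltW | exact: sqr_ge0].
have IBB : (\int[mu \x mu]_z BB z = K)%E.
  rewrite (@fubini_tonelli2 _ _ _ _ R mu mu BB mBB BB0); apply: eq_integral => v _.
  rewrite /fubini_G /BB /P /=.
  under eq_integral => u _ do rewrite EFinM muleC.
  rewrite ge0_integralZl //.
  - by rewrite stp -EFinM mulrC.
  - by apply: mc1 => u; apply: cvgM; [exact: cp | exact: cPu].
  - by move=> u _; rewrite lee_fin; apply: mulr_ge0; [exact: ltW | exact: Psi0].
  - by rewrite lee_fin; exact: sqr_ge0.
have ICC : (\int[mu \x mu]_z CC z = K)%E.
  rewrite (@fubini_tonelli2 _ _ _ _ R mu mu CC mCC CC0); apply: eq_integral => v _.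
  rewrite /fubini_G /CC /P /=.
  under eq_integral => u _ do rewrite EFinM muleC.
  rewrite ge0_integralZl //.
  - rewrite stq -EFinM; congr EFin; rewrite /h; field.
    by rewrite gt_eqF.
  - by apply: mc1 => u; apply: cvgM; [exact: cq | exact: cPu].
  - by move=> u _; rewrite lee_fin; apply: mulr_ge0; [exact: ltW | exact: Psi0].
  - by rewrite lee_fin; exact: h0.
have K0 : (0 <= K)%E.
  apply: integral_ge0 => u _; rewrite lee_fin; apply: mulr_ge0; [exact: ltW | exact: sqr_ge0].
have Kfin : (K < +oo)%E.
  apply: le_lt_trans (fU1_int R).
  apply: ge0_le_integral => //.
  - by move=> u _; rewrite lee_fin; apply: mulr_ge0; [exact: ltW | exact: sqr_ge0].
  - apply: mc1 => u; apply: cvgM; first exact: cp.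
    by apply: (@continuous_comp _ _ _ h (fun x => x ^+ 2) u); [exact: ch | exact: sqr_continuous].
  - by apply: mc1; exact: fU_cont.
  - move=> u _; rewrite lee_fin.
    have -> : p u * h u ^+ 2 = q u * h u by rewrite /h; field; rewrite gt_eqF.
    by rewrite ler_piMr // ltW.
have E1 : (\int[mu \x mu]_z (FF z + (CC z + CC z)) = \int[mu \x mu]_z (AA z + BB z))%E.
  by apply: eq_integral => z _; exact: key.
have D1 : (\int[mu \x mu]_z (FF z + (CC z + CC z)) = \int[mu \x mu]_z FF z + (\int[mu \x mu]_z CC z + \int[mu \x mu]_z CC z))%E.
  rewrite ge0_integralD //; last 2 first.
  - by move=> z _; apply: adde_ge0.
  - exact: emeasurable_funD.
  by rewrite ge0_integralD.
have D2 : (\int[mu \x mu]_z (AA z + BB z) = \int[mu \x mu]_z AA z + \int[mu \x mu]_z BB z)%E.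
  by rewrite ge0_integralD.
rewrite D1 D2 ICC IAA IBB in E1.
have IFF0 : (\int[mu \x mu]_z FF z = 0)%E.
  have Kr : K = (fine K)%:E by rewrite fineK // ge0_fin_numE.
  move: E1; rewrite Kr -!EFinD.
  case: (\int[mu \x mu]_z FF z)%E => [r | | ] //=.
  by move=> /eqP; rewrite -EFinD eqe => /eqP H; congr EFin; lra.
have [v0 [v00 Pv0]] : exists v0 : R, v0 != 0 /\ 0 < Psi v0 0.
  apply: contrapT => H.
  have Z v : v != 0 -> Psi v 0 = 0.
    move=> vn; apply/eqP; rewrite eq_le Psi0 andbT leNgt; apply/negP => pos.
    by apply: H; exists v.
  have Z0 : Psi 0 0 = 0.
    apply/eqP; rewrite eq_le Psi0 andbT leNgt; apply/negP => pos.
    have := @cvgr_gt _ _ _ _ (fun v => Psi v 0) (Psi 0 0) (cPv 0 0) 0 pos.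
    move=> Hn; have Hn2 : \forall t \near nbhs (0:R), 0 < Psi t 0 by apply: Hn.
    have [e /= e0 He] := (nbhs_ballP _ _).1 Hn2.
    have : ball (0 : R) e (e / 2).
      rewrite /ball /= sub0r normrN gtr0_norm ?divr_gt0 //; lra.
    move=> /He /=; rewrite Z ?ltxx //.
    by rewrite gt_eqF // divr_gt0.
  have : (\int[mu]_v (Psi v 0)%:E = 0)%E.
    rewrite -(integral0 mu setT); apply: eq_integral => v _.
    by case: (eqVneq v 0) => [->|vn]; rewrite ?Z0 ?Z.
  by rewrite tot => /eqP; rewrite eqe oner_eq0.
have f00 : fU (-1) (0 : R) = fU 1 0.
  by rewrite /fU; congr (_ + _); congr (_ * expR (- _)); ring.
have hv : h 0 != h v0.
  apply/negP => /eqP E.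
  have c0 := q0 0.
  have cv := q0 v0.
  have : fU (-1) v0 = fU 1 v0.
    move: E; rewrite /h /p /q f00 => /eqP.
    rewrite eqr_div; last 2 first.
    - by rewrite gt_eqF // addr_gt0.
    - by rewrite gt_eqF // addr_gt0 // fU_gt0.
    move=> /eqP E; apply: (@mulfI _ (fU 1 0)); first by rewrite gt_eqF.
    rewrite /q in c0 cv. nra.
  by move/fU_eq => /eqP; rewrite (negbTE v00).
pose Phi0 := p 0 * P (0, v0) * (h 0 - h v0) ^+ 2.
have Phi0_gt0 : 0 < Phi0.
  rewrite /Phi0; apply: mulr_gt0; first by apply: mulr_gt0.
  by rewrite lt_neqAle sqr_ge0 andbT eq_sym sqrf_eq0 subr_eq0.

pose eps := Phi0 / 2.
have eps0 : 0 < eps by rewrite /eps divr_gt0.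
have Hn2 : \forall z \near nbhs ((0:R), v0), eps < p z.1 * P z * (h z.1 - h z.2) ^+ 2.
  apply: (cvgr_gt Phi0 (cFF (0, v0))); rewrite /eps; lra.
have [e /= e0 He] := (nbhs_ballP _ _).1 Hn2.
have Hb u v : ball (0:R) e u -> ball v0 e v -> (eps%:E <= FF (u, v))%E.
  move=> bu bv; rewrite /FF lee_fin; apply: ltW.
  by have := He (u, v) (conj bu bv).
have mball (x : R) : measurable (ball x e) by rewrite ball_itv; exact: measurable_itv.
have muball (x : R) : (mu (ball x e) = (e *+ 2)%:E)%E.
  rewrite ball_itv lebesgue_measure_itv /= lte_fin.
  have -> : (x - e < x + e) = true by apply/idP; lra.
  by rewrite -EFinD; congr EFin; ring.
have mFv u : measurable_fun setT (fun v => FF (u, v)).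
  apply: mc1 => v.
  apply: (@continuous_comp _ _ _ (fun v : R => (u, v))
     (fun z : R * R => p z.1 * P z * (h z.1 - h z.2) ^+ 2) v); last exact: cFF.
  exact: (cvg_pair (cvg_cst u) cvg_id).
have Gu u : ball (0:R) e u -> ((eps * (e *+ 2))%:E <= \int[mu]_v FF (u, v))%E.
  move=> bu.
  apply: (le_trans _ (ge0_subset_integral mu (mball v0) measurableT (mFv u)
            (fun v _ => FF0 (u, v)) (@subsetT _ _))).
  rewrite EFinM -(muball v0) -integral_cst //.
  all: try apply: ge0_le_integral => //.
  all: try first [by rewrite ball_itv; exact: measurable_itv
    | by move=> v _; rewrite /= lee_fin ltW
    | exact: (measurable_funS measurableT (@subsetT _ _) (mFv u))
    | by move=> v bv; exact: Hb].
have mG := @measurable_fun_fubini_tonelli_F _ _ _ _ R mu FF mFF FF0.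
have G0 u : (0 <= fubini_F mu FF u)%E by apply: integral_ge0 => v _; exact: FF0.
move: IFF0; rewrite (@fubini_tonelli1 _ _ _ _ R mu mu FF mFF FF0) => IFF0.
have : ((eps * (e *+ 2) * (e *+ 2))%:E <= 0)%E.
  rewrite -IFF0.
  apply: (le_trans _ (ge0_subset_integral mu (mball 0) measurableT mG
            (fun u _ => G0 u) (@subsetT _ _))).
  rewrite EFinM -(muball 0) -integral_cst //.
  all: try apply: ge0_le_integral => //.
  all: try first [by rewrite ball_itv; exact: measurable_itv
    | by move=> u _; rewrite /= lee_fin; apply: ltW; apply: mulr_gt0 => //; rewrite pmulrn_lgt0
    | exact: (measurable_funS measurableT (@subsetT _ _) mG)
    | by move=> u bu; exact: Gu].
rewrite lee_fin leNgt => /negP.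
apply; apply: mulr_gt0; first apply: mulr_gt0 => //.
all: by rewrite pmulrn_lgt0.
Qed.
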